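(* Let $S$ be an inverse monoid which is either (a) $E^*$-unitary and $0$-bisimple, or (b) $E$-unitary and bisimple, and let $C$ be the right unit submonoid of $S$. Then $S$ is $F^*$-inverse in case (a) (respectively $F$-inverse in case (b)) if and only if the partially ordered set $P_r(C)$ of principal right ideals of $C$ is a join semilattice.
   Context: For an inverse monoid $S$, $E(S)$ denotes its set of idempotents and, if $S$ has a zero, $E^*(S)$ its nonzero idempotents. A subset $U$ is unitary if for $u\in U$, $s\in S$: $su\in U\Rightarrow s\in U$ and $us\in U\Rightarrow s\in U$. $S$ is $E$-unitary if $E(S)$ is unitary, and $E^*$-unitary if $E^*(S)$ is unitary. $S$ is bisimple if all its elements are $\mathscr{D}$-related, and $0$-bisimple (for $S$ with zero) if all its nonzero elements are $\mathscr{D}$-related. The right unit submonoid of $S$ is $\{s\in S: st=1 \text{ for some } t\in S\}$. The natural partial order is $a\le b$ iff $a=eb$ for some idempotent $e$; $S$ is $F^*$-inverse if every nonzero element lies beneath a unique maximal element, and $F$-inverse (for $S$ without zero) if every element lies beneath a unique maximal element. $P_r(C)$ is the set $\{aC : a\in C\}$ ordered by inclusion; a join semilattice is a poset in which any two elements have a least upper bound. *)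

(* Defs.v *)
Set Implicit Arguments.

Section InverseMonoids.
Variable S : Type.
Variable mul : S -> S -> S.
Variable one : S.

Definition is_inverse_monoid : Prop :=
  (forall a b c, mul (mul a b) c = mul a (mul b c)) /\
  (forall a, mul one a = a) /\ (forall a, mul a one = a) /\
  (forall a, exists! b, mul (mul a b) a = a /\ mul (mul b a) b = b).

Definition idempotent (e : S) : Prop := mul e e = e.

Definition is_zero (z : S) : Prop := forall x, mul z x = z /\ mul x z = z.

Definition nonzero_idempotent (z e : S) : Prop := idempotent e /\ e <> z.

Definition unitary (U : S -> Prop) : Prop :=
  forall u s, U u -> (U (mul s u) -> U s) /\ (U (mul u s) -> U s).

Definition E_unitary : Prop := unitary idempotent.
Definition Estar_unitary (z : S) : Prop := unitary (nonzero_idempotent z).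

Definition greenR (a b : S) : Prop :=
  (exists x, a = mul b x) /\ (exists y, b = mul a y).
Definition greenL (a b : S) : Prop :=
  (exists x, a = mul x b) /\ (exists y, b = mul y a).
Definition greenD (a b : S) : Prop := exists c, greenR a c /\ greenL c b.

Definition bisimple : Prop := forall a b, greenD a b.
Definition zero_bisimple (z : S) : Prop :=
  forall a b, a <> z -> b <> z -> greenD a b.

Definition nat_le (a b : S) : Prop := exists e, idempotent e /\ a = mul e b.
Definition maximal (m : S) : Prop := forall x, nat_le m x -> x = m.

Definition F_inverse : Prop :=
  forall a, exists! m, maximal m /\ nat_le a m.
Definition Fstar_inverse (z : S) : Prop :=
  forall a, a <> z -> exists! m, maximal m /\ nat_le a m.

Definition right_unit (s : S) : Prop := exists t, mul s t = one.

Definition pr_ideal (a : S) : S -> Prop :=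
  fun x => exists c, right_unit c /\ x = mul a c.

Definition pr_incl (a b : S) : Prop := forall x, pr_ideal a x -> pr_ideal b x.

Definition Pr_join_semilattice : Prop :=
  forall a b, right_unit a -> right_unit b ->
    exists c, right_unit c /\ pr_incl a c /\ pr_incl b c /\
      (forall d, right_unit d -> pr_incl a d -> pr_incl b d -> pr_incl c d).

End InverseMonoids.

(* Main.v *)
Require Import Defs.
From Stdlib Require Import ClassicalEpsilon.

Section Inv.
Variable S : Type.
Variable mul : S -> S -> S.
Variable one : S.
Hypothesis HM : is_inverse_monoid mul one.
Local Infix "*" := mul.

Lemma assoc a b c : (a*b)*c = a*(b*c).
Proof. destruct HM as [h _]; apply h. Qed.
Lemma one_l a : one * a = a.
Proof. destruct HM as [_ [h _]]; apply h. Qed.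
Lemma one_r a : a * one = a.
Proof. destruct HM as [_ [_ [h _]]]; apply h. Qed.
Lemma inv_ex a : exists b, a*(b*a) = a /\ b*(a*b) = b.
Proof. destruct HM as [_ [_ [_ h]]]. destruct (h a) as [b [[h1 h2] _]].
  exists b; rewrite <- !assoc; auto. Qed.
Definition inv (a : S) : S := proj1_sig (constructive_indefinite_description _ (inv_ex a)).
Lemma inv_s1 a : a * (inv a * a) = a.
Proof. unfold inv; destruct constructive_indefinite_description as [b [h1 h2]]; exact h1. Qed.
Lemma inv_s2 a : inv a * (a * inv a) = inv a.
Proof. unfold inv; destruct constructive_indefinite_description as [b [h1 h2]]; exact h2. Qed.
Lemma inv_uniq a b : a*(b*a) = a -> b*(a*b) = b -> b = inv a.
Proof. intros h1 h2. destruct HM as [_ [_ [_ h]]]. destruct (h a) as [c [_ hu]].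
  rewrite <- (hu b), <- (hu (inv a)); auto.
  - rewrite !assoc; split; [apply inv_s1|apply inv_s2].
  - rewrite !assoc; auto. Qed.
Lemma inv_s1t a w : a * (inv a * (a * w)) = a * w.
Proof. rewrite <- (assoc (inv a)), <- assoc, inv_s1; auto. Qed.
Lemma inv_s2t a w : inv a * (a * (inv a * w)) = inv a * w.
Proof. rewrite <- (assoc a), <- assoc, inv_s2; auto. Qed.
Lemma inv_inv a : inv (inv a) = a.
Proof. symmetry; apply inv_uniq; [apply inv_s2|apply inv_s1]. Qed.
Lemma idem_inv e : e*e = e -> inv e = e.
Proof. intro h; symmetry; apply inv_uniq; rewrite !h; auto. Qed.
Lemma idem_t e w : e*e = e -> e*(e*w) = e*w.
Proof. intro h; rewrite <- assoc, h; auto. Qed.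

Lemma idem_mul e f : e*e = e -> f*f = f -> (e*f)*(e*f) = e*f.
Proof. intros he hf.
  set (x := inv (e*f)).
  assert (Hy : f*(x*e) = x).
  { apply inv_uniq.
    - rewrite !assoc, (idem_t f), (idem_t e) by auto.
      pose proof (inv_s1 (e*f)) as Hs; fold x in Hs; rewrite !assoc in Hs; exact Hs.
    - rewrite !assoc, (idem_t f), (idem_t e) by auto.
      pose proof (inv_s2t (e*f) e) as Hs; fold x in Hs; rewrite !assoc in Hs.
      rewrite Hs. auto. }
  assert (Hx : x*x = x).
  { rewrite <- Hy at 1 2. rewrite !assoc.
    pose proof (inv_s2t (e*f) e) as Hs; fold x in Hs; rewrite !assoc in Hs.
    rewrite Hs. exact Hy. }
  assert (e*f = inv x) as E by (unfold x; rewrite inv_inv; auto).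
  rewrite (idem_inv _ Hx) in E. rewrite E; auto.
Qed.

Lemma idem_comm e f : e*e = e -> f*f = f -> e*f = f*e.
Proof. intros he hf. pose proof (idem_mul e f he hf) as h1.
  pose proof (idem_mul f e hf he) as h2.
  rewrite <- (idem_inv _ h1). symmetry. apply inv_uniq.
  - rewrite !assoc, (idem_t f), (idem_t e) by auto. rewrite !assoc in h1; exact h1.
  - rewrite !assoc, (idem_t e), (idem_t f) by auto. rewrite !assoc in h2; exact h2.
Qed.
Lemma comm_t e f w : e*e = e -> f*f = f -> e*(f*w) = f*(e*w).
Proof. intros he hf. rewrite <- !assoc, (idem_comm e f); auto. Qed.
Lemma idR a : (a*inv a)*(a*inv a) = a*inv a.
Proof. rewrite !assoc, inv_s1t; auto. Qed.
Lemma idL a : (inv a*a)*(inv a*a) = inv a*a.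
Proof. rewrite !assoc, inv_s2t; auto. Qed.
Lemma cLR a b w : inv a*(a*(b*(inv b*w))) = b*(inv b*(inv a*(a*w))).
Proof. pose proof (comm_t _ _ w (idL a) (idR b)). rewrite !assoc in H; exact H. Qed.
Lemma cRL a b w : a*(inv a*(inv b*(b*w))) = inv b*(b*(a*(inv a*w))).
Proof. pose proof (comm_t _ _ w (idR a) (idL b)). rewrite !assoc in H; exact H. Qed.
Lemma cLL a b w : inv a*(a*(inv b*(b*w))) = inv b*(b*(inv a*(a*w))).
Proof. pose proof (comm_t _ _ w (idL a) (idL b)). rewrite !assoc in H; exact H. Qed.
Lemma cRR a b w : a*(inv a*(b*(inv b*w))) = b*(inv b*(a*(inv a*w))).
Proof. pose proof (comm_t _ _ w (idR a) (idR b)). rewrite !assoc in H; exact H. Qed.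

Lemma inv_mul a b : inv (a*b) = inv b * inv a.
Proof. symmetry; apply inv_uniq; rewrite !assoc.
  - rewrite (cRL b a), inv_s1t, inv_s1; auto.
  - rewrite cLR, inv_s2t, inv_s2; auto.
Qed.
Lemma inv_one : inv one = one.
Proof. apply idem_inv, one_l. Qed.

Definition C u := u * inv u = one.
Lemma ru_C u : right_unit mul one u <-> C u.
Proof. split.
  - intros [t Ht]. unfold C. rewrite <- (one_r (u*inv u)), <- Ht, !assoc, inv_s1t; auto.
  - intro h; exists (inv u); exact h. Qed.
Lemma Ct u w : C u -> u*(inv u*w) = w.
Proof. intro h; rewrite <- assoc, h, one_l; auto. Qed.
Lemma C_one : C one.
Proof. unfold C; rewrite inv_one, one_l; auto. Qed.
Lemma C_mul u v : C u -> C v -> C (u*v).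
Proof. intros hu hv; unfold C; rewrite inv_mul, !assoc, Ct; auto. Qed.
Lemma rcancel g x y : C g -> x*g = y*g -> x = y.
Proof. intros hg h. rewrite <- (one_r x), <- (one_r y), <- hg, <- !assoc, h; auto. Qed.
Lemma cRf b f w : f*f = f -> b*(inv b*(f*w)) = f*(b*(inv b*w)).
Proof. intro hf. pose proof (comm_t _ _ w (idR b) hf). rewrite !assoc in H; exact H. Qed.
Lemma cLf b f w : f*f = f -> inv b*(b*(f*w)) = f*(inv b*(b*w)).
Proof. intro hf. pose proof (comm_t _ _ w (idL b) hf). rewrite !assoc in H; exact H. Qed.
Lemma natle1 a b : nat_le mul a b -> a = a*(inv a*b).
Proof. intros [f [hf ->]]. unfold idempotent in hf.
  rewrite inv_mul, (idem_inv _ hf), !assoc.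
  rewrite (cRf b f) by auto. rewrite idem_t, inv_s1; auto. Qed.
Lemma natle2 a b : nat_le mul a b -> a = b*(inv a*a).
Proof. intros [f [hf ->]]. unfold idempotent in hf.
  rewrite inv_mul, (idem_inv _ hf), !assoc, (idem_t f) by auto.
  rewrite (cRf b f) by auto. rewrite inv_s1; auto. Qed.
Lemma natle_trans a b c : nat_le mul a b -> nat_le mul b c -> nat_le mul a c.
Proof. intros [f [hf ->]] [g [hg ->]]. exists (f*g); split.
  - apply idem_mul; auto.
  - rewrite assoc; auto. Qed.

Lemma L1 u v x y : C u -> C v -> C x -> C y ->
  nat_le mul (inv u * v) (inv x * y) -> exists c, C c /\ u = c*x /\ v = c*y.
Proof. intros hu hv hx hy hle.
  pose proof (natle1 _ _ hle) as E1. rewrite inv_mul, inv_inv, !assoc, (Ct v) in E1 by auto.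
  assert (Ev : v = u*(inv x*y)).
  { transitivity (u*(inv u*v)); [symmetry; apply Ct; auto|]. rewrite E1, inv_s1t; auto. }
  pose proof (natle2 _ _ hle) as E2. rewrite inv_mul, inv_inv, !assoc, (Ct u) in E2 by auto.
  assert (Eu' : inv u = inv x*(y*inv v)).
  { transitivity ((inv u * v)*inv v). { rewrite assoc, hv, one_r; auto. }
    rewrite E2, !assoc, inv_s2; auto. }
  assert (Eu : u = v*(inv y*x)).
  { rewrite <- (inv_inv u), Eu', !inv_mul, !inv_inv, assoc; auto. }
  assert (Eu2 : u = u*(inv x*x)).
  { rewrite Eu at 1. rewrite Ev, !assoc, (Ct y); auto. }
  assert (Eut : forall w, u*(inv x*(x*w)) = u*w).
  { intro w. rewrite Eu2 at 2. rewrite !assoc; auto. }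
  exists (u*inv x); split; [|split].
  - unfold C. rewrite inv_mul, inv_inv, !assoc, Eut; auto.
  - rewrite assoc; auto.
  - rewrite assoc; auto.
Qed.
Lemma L2 c x y : C c -> C x -> C y -> nat_le mul (inv (c*x) * (c*y)) (inv x * y).
Proof. intros hc hx hy. exists (inv x*(inv c*(c*x))); split.
  - unfold idempotent. rewrite !assoc, (Ct x), inv_s2t; auto.
  - rewrite inv_mul, !assoc, (Ct x); auto.
Qed.
Lemma pr_incl_C a b : C a -> pr_incl mul one a b -> exists c, C c /\ a = b*c.
Proof. intros ha h. destruct (h a) as [c [hc e]].
  - exists one; split; [apply ru_C, C_one| rewrite one_r; auto].
  - exists c; split; [apply ru_C|]; auto. Qed.
Lemma C_pr_incl a b c : C c -> a = b*c -> pr_incl mul one a b.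
Proof. intros hc -> w [k [hk ->]]. exists (c*k); split.
  - apply ru_C, C_mul; auto; apply ru_C; auto.
  - rewrite assoc; auto. Qed.

Section Core.
Variable N : S -> Prop.
Hypothesis rep : forall s, N s -> exists u v, C u /\ C v /\ s = inv u * v.
Hypothesis lc : forall d x y, C d -> C x -> C y -> d*x = d*y -> x = y.
Hypothesis Nup : forall s t, N s -> nat_le mul s t -> N t.
Hypothesis Nuv : forall u v, C u -> C v -> N (inv u * v).

Theorem core : (forall a, N a -> exists! m, maximal mul m /\ nat_le mul a m) <->
  Pr_join_semilattice mul one.
Proof. split.
- intros HF a b ha hb. apply ru_C in ha, hb.
  destruct (HF (inv a*b) (Nuv a b ha hb)) as [m [[mmax sm] muniq]].
  destruct (rep m (Nup _ _ (Nuv a b ha hb) sm)) as [x [y [hx [hy ->]]]].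
  destruct (L1 a b x y ha hb hx hy sm) as [c [hc [ea eb]]].
  exists c. split; [apply ru_C; auto|]. split; [apply (C_pr_incl a c x hx ea)|].
  split; [apply (C_pr_incl b c y hy eb)|].
  intros d hd hda hdb. apply ru_C in hd.
  destruct (pr_incl_C a d ha hda) as [x2 [hx2 ea2]].
  destruct (pr_incl_C b d hb hdb) as [y2 [hy2 eb2]].
  pose proof (L2 d x2 y2 hd hx2 hy2) as hs2. rewrite <- ea2, <- eb2 in hs2.
  destruct (HF (inv x2*y2) (Nup _ _ (Nuv a b ha hb) hs2)) as [m2 [[m2max hm2] _]].
  assert (E : inv x*y = m2) by (apply muniq; split; [auto| eapply natle_trans; eauto]).
  rewrite <- E in hm2.
  destruct (L1 x2 y2 x y hx2 hy2 hx hy hm2) as [e [he [ex2 ey2]]].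
  assert (d*e = c).
  { apply (rcancel x); auto. rewrite assoc, <- ex2, <- ea2, ea; auto. }
  apply (C_pr_incl c d e he); auto.
- intros HJ s Ns. destruct (rep s Ns) as [u [v [hu [hv ->]]]].
  destruct (HJ u v (proj2 (ru_C u) hu) (proj2 (ru_C v) hv)) as [c [hc [huc [hvc hmin]]]].
  apply ru_C in hc.
  destruct (pr_incl_C u c hu huc) as [x [hx eu]].
  destruct (pr_incl_C v c hv hvc) as [y [hy ev]].
  assert (sm : nat_le mul (inv u*v) (inv x*y)) by (rewrite eu, ev; apply L2; auto).
  exists (inv x*y). split; [split|].
  + intros t hmt. pose proof (Nup _ _ (Nup _ _ Ns sm) hmt) as Nt.
    destruct (rep t Nt) as [x2 [y2 [hx2 [hy2 ->]]]].
    destruct (L1 x y x2 y2 hx hy hx2 hy2 hmt) as [e [he [ex ey]]].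
    assert (hce : C (c*e)) by (apply C_mul; auto).
    assert (pr_incl mul one c (c*e)) as hcce.
    { apply hmin; [apply ru_C; auto| |].
      - apply (C_pr_incl u (c*e) x2 hx2). rewrite eu, ex, assoc; auto.
      - apply (C_pr_incl v (c*e) y2 hy2). rewrite ev, ey, assoc; auto. }
    destruct (pr_incl_C c (c*e) hc hcce) as [g [hg eg]].
    assert (eg1 : one = e*g).
    { apply (lc c); auto. apply C_one. apply C_mul; auto. rewrite one_r, <- assoc; auto. }
    assert (ge1 : g*e = one).
    { apply (rcancel g); auto. rewrite assoc, <- eg1, one_r, one_l; auto. }
    assert (ie : g = inv e).
    { apply inv_uniq; [rewrite ge1, one_r| rewrite <- eg1, one_r]; auto. }
    rewrite ex, ey, inv_mul, <- ie, !assoc. rewrite <- (assoc g e), ge1, one_l; auto.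
  + auto.
  + intros m2 [m2max hm2]. pose proof (Nup _ _ Ns hm2) as Nm2.
    destruct (rep m2 Nm2) as [x3 [y3 [hx3 [hy3 ->]]]].
    destruct (L1 u v x3 y3 hu hv hx3 hy3 hm2) as [c3 [hc3 [eu3 ev3]]].
    assert (pr_incl mul one c c3) as hcc3.
    { apply hmin; [apply ru_C; auto| |].
      - apply (C_pr_incl u c3 x3 hx3); auto.
      - apply (C_pr_incl v c3 y3 hy3); auto. }
    destruct (pr_incl_C c c3 hc hcc3) as [h [hh eh]].
    assert (E1 : h*x = x3). { apply (lc c3); auto. apply C_mul; auto.
      rewrite <- assoc, <- eh, <- eu, eu3; auto. }
    assert (E2 : h*y = y3). { apply (lc c3); auto. apply C_mul; auto.
      rewrite <- assoc, <- eh, <- ev, ev3; auto. }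
    apply m2max. rewrite <- E1, <- E2. apply L2; auto.
Qed.
End Core.

Lemma idem_rep e : e*e = e -> greenD mul e one -> exists w, C w /\ e = inv w * w.
Proof. intros he [c [[[x1 e1] [y1 e2]] [_ [y e3]]]].
  assert (hc : C (inv c)).
  { apply ru_C. exists (inv y). rewrite <- inv_mul, <- e3, inv_one; auto. }
  exists (inv c); split; auto. rewrite inv_inv.
  assert (A : e = c*(inv c*e)) by (rewrite e1, inv_s1t; auto).
  assert (B : e*(c*inv c) = c*inv c).
  { assert (Ec : e*c = c) by (rewrite e2, <- assoc, he; auto). rewrite <- assoc, Ec; auto. }
  assert (Cm : e*(c*inv c) = (c*inv c)*e) by (apply idem_comm; auto; apply idR).
  rewrite A at 1. rewrite <- assoc, <- Cm, B; auto.
Qed.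
Lemma rep_gen s : greenD mul (s*inv s) one -> greenD mul (inv s*s) one ->
  exists u v, C u /\ C v /\ s = inv u * v.
Proof. intros g1 g2.
  destruct (idem_rep _ (idR s) g1) as [a [ha Ea]].
  destruct (idem_rep _ (idL s) g2) as [b [hb Eb]].
  assert (Ta : forall w, inv a*(a*w) = s*(inv s*w)) by (intro w; rewrite <- !assoc, Ea; auto).
  assert (Tb : forall w, inv b*(b*w) = inv s*(s*w)) by (intro w; rewrite <- !assoc, Eb; auto).
  assert (hx : C (a*(s*inv b))).
  { unfold C. rewrite !inv_mul, !inv_inv, !assoc, Tb, inv_s1t, <- Ta, inv_s1t. exact ha. }
  exists a, (a*(s*inv b)*b). split; auto. split.
  - apply C_mul; auto.
  - rewrite !assoc, <- Eb, inv_s1, Ta, inv_s1; auto.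
Qed.
Lemma lc_gen (P : S -> Prop)
  (U : forall e f, e*e = e -> P e -> e*f = e -> f*f = f)
  d x y : C d -> C x -> C y -> P (inv y*(inv d*(d*y))) -> P (inv x*(inv d*(d*x))) ->
  d*x = d*y -> x = y.
Proof. intros hd hx hy p1 p2 E.
  assert (F : (inv y*x)*(inv y*x) = inv y*x).
  { apply (U (inv y*(inv d*(d*y)))); auto.
    - rewrite !assoc, (Ct y), inv_s2t; auto.
    - rewrite !assoc, (Ct y), E; auto. }
  assert (G : (inv x*y)*(inv x*y) = inv x*y).
  { apply (U (inv x*(inv d*(d*x)))); auto.
    - rewrite !assoc, (Ct x), inv_s2t; auto.
    - rewrite !assoc, (Ct x), E; auto. }
  set (f := inv y*x) in *. set (g := inv x*y) in *.
  assert (Ex : x = y*f) by (unfold f; rewrite Ct; auto).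
  assert (Ey : y = x*g) by (unfold g; rewrite Ct; auto).
  assert (Eyg : y*g = y) by (rewrite Ey at 1; rewrite assoc, G; auto).
  rewrite Ey, Ex, assoc, (idem_comm f g), <- assoc, Eyg; auto.
Qed.
End Inv.
Arguments inv {S mul one} HM a.
Arguments one_r {S mul one} HM a.
Arguments one_l {S mul one} HM a.
Arguments assoc {S mul one} HM a b c.
Arguments inv_s1 {S mul one} HM a.
Arguments Ct {S mul one} HM u w _.
Arguments C {S mul one} HM u.
Arguments core {S mul one} HM N _ _ _ _.
Arguments rep_gen {S mul one} HM s _ _.
Arguments lc_gen {S mul one} HM P _ d x y _ _ _ _ _ _.
From Stdlib Require Import Classical.

Theorem proposition4p3 (S : Type) (mul : S -> S -> S) (one : S) :
  is_inverse_monoid mul one ->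
  (forall z : S, is_zero mul z -> Estar_unitary mul z -> zero_bisimple mul z ->
     (Fstar_inverse mul z <-> Pr_join_semilattice mul one)) /\
  (E_unitary mul -> bisimple mul ->
     (F_inverse mul <-> Pr_join_semilattice mul one)).
Proof.
  intros HM. split.
  - intros z hz hEs hzb.
    destruct (classic (one = z)) as [Hoz|Hoz].
    + assert (all : forall x, x = z).
      { intro x. rewrite <- (one_r HM x), Hoz. apply (proj2 (hz x)). }
      split; intros _.
      * intros a b _ _. exists one. split; [exists one; apply (one_l HM)|].
        split; [|split]; [| |intros d _ _ _];
        intros w [c [hc ew]]; exists c; split; auto; rewrite (all w); symmetry; apply all.
      * intros a ha; exfalso; apply ha, all.
    + unfold Fstar_inverse. apply (core HM (fun s => s <> z)).
      * intros s hs. apply (rep_gen HM); apply hzb; auto; intro E; apply hs.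
        -- rewrite <- (inv_s1 HM s), <- (assoc HM), E. apply (proj1 (hz s)).
        -- rewrite <- (inv_s1 HM s), E. apply (proj2 (hz s)).
      * intros d x y hd hx hy E.
        assert (K : forall x0, C HM x0 -> mul (inv HM x0) (mul (inv HM d) (mul d x0)) <> z).
        { intros x0 hx0 E0. apply Hoz.
          assert (Kd : mul (inv HM d) d = mul x0 (mul (mul (inv HM x0) (mul (inv HM d) (mul d x0))) (inv HM x0))).
          { rewrite !(assoc HM). unfold C in hx0. rewrite hx0, (one_r HM), (Ct HM); auto. }
          rewrite E0, (proj1 (hz _)), (proj2 (hz _)) in Kd.
          assert (Ed : d = z) by (rewrite <- (inv_s1 HM d), Kd; apply (proj2 (hz _))).
          unfold C in hd. rewrite <- hd, Ed. apply (proj1 (hz _)). }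
        apply (lc_gen HM (fun e => e <> z)) with d; auto.
        intros e f he pe ef.
        refine (proj1 (proj2 (hEs e f (conj he pe)) _)).
        split; [unfold idempotent| ]; rewrite ef; auto.
      * intros s t hs [f [hf ef]] Et. apply hs. rewrite ef, Et. apply (proj2 (hz f)).
      * intros u v hu hv E. apply Hoz.
        assert (Ev : v = z) by (rewrite <- (Ct HM u v hu), E; apply (proj2 (hz u))).
        unfold C in hv. rewrite <- hv, Ev. apply (proj1 (hz _)).
  - intros hE hb.
    destruct (core HM (fun _ => True)) as [h1 h2].
    + intros s _. apply (rep_gen HM); apply hb.
    + intros d x y hd hx hy E. apply (lc_gen HM (fun _ => True)) with d; auto.
      intros e f he _ ef. apply (proj2 (hE e f he)). unfold idempotent; rewrite ef; auto.
    + auto.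
    + auto.
    + split; intro H.
      * apply h1; intros; apply H.
      * intro a; apply h2; auto.
Qed.
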